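(* For $4-2\sqrt3<p\leq1$, the set $\mathcal{S}(p)$ is empty; that is, there is no $3\times3$ matrix $A=(A_{ij})_{i,j\in[3]}$ with nonnegative entries satisfying all of: (1) $A_{11}+A_{22}+p\leq\sum_{i,j}A_{ij}\leq1$; (2) $A_{1j}\geq\frac12\sum_iA_{ij}$ for all $j\in[3]$, and $A_{i1}\geq\frac12\sum_jA_{ij}$ for all $i\in[3]$; (3) $(A_{1j})^2+(A_{2j})^2\geq p\left(\sum_iA_{ij}\right)^2$ for all $j\in[3]$; (4) $(A_{i1})^2+(A_{i2})^2\geq p\left(\sum_jA_{ij}\right)^2$ for all $i\in[3]$.
   Context: $\mathcal{S}(p)$ denotes the collection of $3\times3$ nonnegative matrices satisfying conditions (1)–(4). *)

(* Defs.v *)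
From HB Require Import structures.
From mathcomp Require Import all_boot all_order all_algebra.
Set Implicit Arguments. Unset Strict Implicit. Unset Printing Implicit Defensive.
Import Order.TTheory GRing.Theory Num.Theory.
Local Open Scope ring_scope.

(* Indices 1,2,3 of the paper are 0,1,2 : 'I_3 here. *)
Definition colsum (R : pzRingType) (A : 'M[R]_3) (j : 'I_3) := \sum_(i < 3) A i j.
Definition rowsum (R : pzRingType) (A : 'M[R]_3) (i : 'I_3) := \sum_(j < 3) A i j.
Definition totsum (R : pzRingType) (A : 'M[R]_3) := \sum_(i < 3) \sum_(j < 3) A i j.

Definition in_S (R : realFieldType) (p : R) (A : 'M[R]_3) : Prop :=
  (forall i j, 0 <= A i j) /\
  (A 0 0 + A 1 1 + p <= totsum A /\ totsum A <= 1) /\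
  (forall j, A 0 j >= colsum A j / 2) /\
  (forall i, A i 0 >= rowsum A i / 2) /\
  (forall j, A 0 j ^+ 2 + A 1 j ^+ 2 >= p * colsum A j ^+ 2) /\
  (forall i, A i 0 ^+ 2 + A i 1 ^+ 2 >= p * rowsum A i ^+ 2).

(* Main.v *)
Require Import Defs.
From HB Require Import structures.
From mathcomp Require Import all_boot all_order all_algebra.
From mathcomp Require Import ring lra.
Import Order.TTheory GRing.Theory Num.Theory.
Local Open Scope ring_scope.

Lemma chord (R : rcfType) (r : R) (x y z : R) : r ^+ 2 = 3 -> 0 < r ->
  0 <= y -> 0 <= z -> y + z <= x -> (4 - 2 * r) * (x + y + z) ^+ 2 <= x ^+ 2 + y ^+ 2 ->
  r * y + (r + 1) * z <= x.
Proof.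
move=> r2 rp y0 z0 h1 h2.
have r17 : 17/10 < r by nra.
have r18 : r < 18/10 by nra.
rewrite leNgt; apply/negP => hc.
set S := y + z.
have hx : x + y + z = x + S by rewrite /S addrA.
rewrite hx in h2.
have hm : y < (r + 1) * S - x by rewrite /S; lra.
case: (lerP (r * S) x) => hS.
- have g0 : 0 <= (2 * S - (r - 1) * x) * (x - r * S).
    apply: mulr_ge0; last lra.
    have : x < (r + 1) * S by lra.
    nra.
  have E : (4 - 2 * r) * (x + S) ^+ 2 - x ^+ 2 - ((r + 1) * S - x) ^+ 2
      = 2 * ((2 * S - (r - 1) * x) * (x - r * S)) + (3 - r ^+ 2) * (S ^+ 2 + 2 * x * S).
    by ring.
  rewrite r2 subrr mul0r addr0 in E.
  have ym : y ^+ 2 < ((r + 1) * S - x) ^+ 2 by nra.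
  nra.
- have g0 : 0 <= (r * S - x) * (r * x - S).
    apply: mulr_ge0; first lra.
    nra.
  have E : (4 - 2 * r) * (x + S) ^+ 2 - x ^+ 2 - S ^+ 2
      = (2 - r) * ((r * S - x) * (r * x - S)) + (r ^+ 2 - 3) * (x * S * (r - 2) - S^+2 - x ^+ 2).
    by ring.
  rewrite r2 subrr mul0r addr0 in E.
  have : 0 < (2 - r) * ((r * S - x) * (r * x - S)).
    apply: mulr_gt0; first lra.
    apply: mulr_gt0; first lra.
    nra.
  have yS : y ^+ 2 <= S ^+ 2 by rewrite /S; nra.
  nra.
Qed.

Lemma colsumE (R : rcfType) (A : 'M[R]_3) j : colsum A j = A 0 j + A 1 j + A 2%:R j.
Proof. rewrite /colsum !big_ord_recr big_ord0 /= add0r.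
by congr (A _ j + A _ j + A _ j); apply/val_inj. Qed.

Lemma rowsumE (R : rcfType) (A : 'M[R]_3) i : rowsum A i = A i 0 + A i 1 + A i 2%:R.
Proof. rewrite /rowsum !big_ord_recr big_ord0 /= add0r.
by congr (A i _ + A i _ + A i _); apply/val_inj. Qed.

Lemma totsumE (R : rcfType) (A : 'M[R]_3) : totsum A = rowsum A 0 + rowsum A 1 + rowsum A 2%:R.
Proof. have -> : totsum A = \sum_(i < 3) rowsum A i by [].
rewrite !big_ord_recr big_ord0 /= add0r.
by congr (rowsum A _ + rowsum A _ + rowsum A _); apply/val_inj. Qed.

Theorem lemma24 (R : rcfType) (p : R) :
  4 - 2 * Num.sqrt 3 < p -> p <= 1 -> forall A : 'M[R]_3, ~ in_S p A.
Proof.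
move=> hp hp1 A [nn [[h1 h1'] [c2 [r2 [c3 r3]]]]].
set r := Num.sqrt (3 : R).
have hp2 : 4 - 2 * r < p by exact: hp.
have rr : r ^+ 2 = 3 by rewrite /r sqr_sqrtr // ler0n.
have rp : 0 < r by rewrite /r sqrtr_gt0 ltr0n.
have r17 : 17/10 < r by nra.
have r18 : r < 18/10 by nra.
have qp : forall s : R, (4 - 2 * r) * s ^+ 2 <= p * s ^+ 2.
  move=> s; apply: ler_wpM2r; [exact: sqr_ge0 | lra].
have Row : forall i, r * A i 1 + (r + 1) * A i 2%:R <= A i 0.
  move=> i; apply: chord => //.
  - have := r2 i; rewrite rowsumE; lra.
  - apply: le_trans (r3 i); rewrite rowsumE; exact: qp.
have Col : forall j, r * A 1 j + (r + 1) * A 2%:R j <= A 0 j.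
  move=> j; apply: chord => //.
  - have := c2 j; rewrite colsumE; lra.
  - apply: le_trans (c3 j); rewrite colsumE; exact: qp.
have R0 := Row 0. have R2 := Row 2%:R. have C0 := Col 0. have C2 := Col 2%:R.
rewrite totsumE !rowsumE in h1 h1'.
move: R0 R2 C0 C2 h1 h1' (nn 0 0) (nn 0 1) (nn 0 2%:R) (nn 1 0) (nn 1 1) (nn 1 2%:R)
  (nn 2%:R 0) (nn 2%:R 1) (nn 2%:R 2%:R).
set a00 := A 0 0; set a01 := A 0 1; set a02 := A 0 2%:R;
set a10 := A 1 0; set a11 := A 1 1; set a12 := A 1 2%:R;
set a20 := A 2%:R 0; set a21 := A 2%:R 1; set a22 := A 2%:R 2%:R.
move=> R0 R2 C0 C2 h1 h1' n00 n01 n02 n10 n11 n12 n20 n21 n22.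
set T := a00 + a01 + a02 + (a10 + a11 + a12) + (a20 + a21 + a22) in h1 h1'.
have k1 : r * T <= (r + 2) * (a00 + a11).
  have ha : 0 <= r * a22 by apply: mulr_ge0; lra.
  rewrite /T; lra.
have k2 : (r + 2) * (a00 + a11 + p) <= (r + 2) * T.
  apply: ler_wpM2l; lra.
have k3 : (r + 2) * (4 - 2 * r) < (r + 2) * p by rewrite ltr_pM2l; lra.
have k4 : (r + 2) * (4 - 2 * r) = 2.
  have -> : (r + 2) * (4 - 2 * r) = 8 - 2 * r ^+ 2 by ring.
  by rewrite rr; ring.
have k5 : (r + 2) * p <= 2.
  have : (r + 2) * T <= (r + 2) * 1 by apply: ler_wpM2l; lra.
  lra.
lra.
Qed.
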